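(* Let $d\ge 2$ and let $\tau$ be the identity ordering $\tau(t)=t$ (each task seen once, $T=k$). There is an absolute constant $C>0$ such that for every $k\ge 2$, $$1-\sup_{S\in\mathcal{S}_{T=k}}F_{\tau,S}(k)\le \frac{C}{\sqrt{k}}.$$ In particular, for every $\epsilon\in(0,1)$ there is a task collection of $k=O(1/\epsilon^2)$ tasks with $F_{\tau,S}(k)>1-\epsilon$.
   Context: Let $d\ge 1$, $T\ge1$. A task is a pair $(X_m,y_m)$ with $X_m\in\mathbb{R}^{n_m\times d}$, $y_m\in\mathbb{R}^{n_m}$ and $\operatorname{rank}(X_m)<d$. $\mathcal{S}_T$ denotes the set of collections $S=\{(X_m,y_m)\}_{m=1}^T$ of $T$ tasks such that $\|X_m\|\le 1$ (spectral norm) for all $m$ and there exists $w\in\mathbb{R}^d$ with $\|w\|\le 1$ and $y_m=X_mw$ for all $m$. A task ordering is a map $\tau:\mathbb{N}^+\to\{1,\dots,T\}$. Given $S$ and $\tau$, the iterates are $w_0=0$ and $w_t=w_{t-1}+X_{\tau(t)}^+(y_{\tau(t)}-X_{\tau(t)}w_{t-1})$ for $t\ge1$, where $A^+$ is the Moore–Penrose pseudoinverse. The forgetting at iteration $k$ is $F_{\tau,S}(k)=\frac1k\sum_{t=1}^k\|X_{\tau(t)}w_k-y_{\tau(t)}\|^2$. *)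

(* Defs.v *)
From HB Require Import structures.
From mathcomp Require Import all_boot all_order all_algebra.
From mathcomp Require Import boolp classical_sets reals.
Set Implicit Arguments. Unset Strict Implicit. Unset Printing Implicit Defensive.
Import Order.TTheory GRing.Theory Num.Theory.
Local Open Scope ring_scope.
Local Open Scope classical_set_scope.

Section Defs.
Variable R : realType.

Definition enorm (n : nat) (v : 'cV[R]_n) : R := Num.sqrt (\sum_(i < n) v i 0 ^+ 2).

Definition opnorm_le1 (m n : nat) (A : 'M[R]_(m, n)) : Prop :=
  forall v : 'cV[R]_n, enorm (A *m v) <= enorm v.

Definition is_MP_pinv (m n : nat) (A : 'M[R]_(m, n)) (B : 'M[R]_(n, m)) : Prop :=
  [/\ A *m B *m A = A, B *m A *m B = B, (A *m B)^T = A *m B & (B *m A)^T = B *m A].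

(* the Moore-Penrose pseudoinverse (exists and is unique) *)
Definition mp_pinv (m n : nat) (A : 'M[R]_(m, n)) : 'M[R]_(n, m) :=
  xget 0 [set B | is_MP_pinv A B].

Definition task (d : nat) := {n : nat & ('M[R]_(n, d) * 'cV[R]_n)%type}.
Definition tX d (s : task d) : 'M[R]_(projT1 s, d) := (projT2 s).1.
Definition ty d (s : task d) : 'cV[R]_(projT1 s) := (projT2 s).2.

(* S_T : collections S = (S 1, ..., S T) of T tasks (values of S outside
   1..T are irrelevant), with rank X_m < d, ||X_m|| <= 1 and a common
   solution w with ||w|| <= 1. *)
Definition in_ST (d T : nat) (S : nat -> task d) : Prop :=
  (forall m, (1 <= m <= T)%N -> (\rank (tX (S m)) < d)%N /\ opnorm_le1 (tX (S m))) /\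
  exists w : 'cV[R]_d, enorm w <= 1 /\
    forall m, (1 <= m <= T)%N -> ty (S m) = tX (S m) *m w.

Fixpoint iterate (d : nat) (S : nat -> task d) (tau : nat -> nat) (t : nat) : 'cV[R]_d :=
  match t with
  | 0 => 0
  | t'.+1 => let w := iterate S tau t' in
             let s := S (tau t) in
             w + mp_pinv (tX s) *m (ty s - tX s *m w)
  end.

Definition forgetting (d : nat) (S : nat -> task d) (tau : nat -> nat) (k : nat) : R :=
  k%:R^-1 * \sum_(1 <= t < k.+1)
     enorm (tX (S (tau t)) *m iterate S tau k - ty (S (tau t))) ^+ 2.

Definition sup_forgetting_id (d k : nat) : R :=
  sup [set x | exists S : nat -> task d, in_ST k S /\ x = forgetting S id k].

End Defs.

(* Main.v *)
Require Import Defs.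
From HB Require Import structures.
From mathcomp Require Import all_boot all_order all_algebra.
From mathcomp Require Import boolp classical_sets reals.
From mathcomp Require Import ring lra zify.
Import Order.TTheory GRing.Theory Num.Theory.
Local Open Scope ring_scope.

Lemma MP_uniq (R : realType) m n (A : 'M[R]_(m,n)) B1 B2 :
  is_MP_pinv A B1 -> is_MP_pinv A B2 -> B1 = B2.
Proof.
move=> [h1 h2 h3 h4] [g1 g2 g3 g4].
have AT2 : A^T = A^T *m (A *m B2).
  by rewrite -{1}g1 trmx_mul g3.
have AT1 : A^T = (B1 *m A) *m A^T.
  by rewrite -{1}h1 -mulmxA trmx_mul h4.
have E1 : B1 = B1 *m A *m B2.
  rewrite -[in LHS]h2 -mulmxA -h3 trmx_mul mulmxA AT2.
  by rewrite !mulmxA -[B1 *m B1^T *m A^T]mulmxA -trmx_mul h3 mulmxA h2.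
have E2 : B2 = B1 *m A *m B2.
  rewrite -[in LHS]g2 -g4 trmx_mul AT1.
  rewrite -[B1 *m A *m A^T *m B2^T]mulmxA -trmx_mul g4 mulmxA.
  have -> : B1 *m A *m B2 *m A *m B2 = B1 *m A *m (B2 *m A *m B2) by rewrite !mulmxA.
  by rewrite g2.
by rewrite E1 -E2.
Qed.

Section Basic.
Variable R : realType.
Variable d : nat.

Definition dot (u v : 'cV[R]_d) : R := (u^T *m v) 0 0.

Lemma dotE u v : dot u v = \sum_i u i 0 * v i 0.
Proof. by rewrite /dot !mxE; apply: eq_bigr => i _; rewrite mxE. Qed.

Lemma dotC u v : dot u v = dot v u.
Proof. by rewrite !dotE; apply: eq_bigr => i _; rewrite mulrC. Qed.

Lemma dotDl u v w : dot (u + v) w = dot u w + dot v w.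
Proof. rewrite !dotE -big_split /=; apply: eq_bigr => i _; by rewrite mxE mulrDl. Qed.

Lemma dotZl a u w : dot (a *: u) w = a * dot u w.
Proof. rewrite !dotE mulr_sumr; apply: eq_bigr => i _; by rewrite mxE mulrA. Qed.

Lemma dotNl u w : dot (- u) w = - dot u w.
Proof. by rewrite -scaleN1r dotZl mulN1r. Qed.

Lemma dotBl u v w : dot (u - v) w = dot u w - dot v w.
Proof. by rewrite dotDl dotNl. Qed.

Lemma dotNr u w : dot w (- u) = - dot w u.
Proof. by rewrite !(dotC w) dotNl. Qed.

Lemma dotDr u v w : dot w (u + v) = dot w u + dot w v.
Proof. by rewrite !(dotC w) dotDl. Qed.
Lemma dotZr a u w : dot w (a *: u) = a * dot w u.
Proof. by rewrite !(dotC w) dotZl. Qed.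
Lemma dotBr u v w : dot w (u - v) = dot w u - dot w v.
Proof. by rewrite !(dotC w) dotBl. Qed.

Lemma dot_ge0 u : 0 <= dot u u.
Proof. rewrite dotE; apply: sumr_ge0 => i _; by rewrite -expr2 sqr_ge0. Qed.

Lemma enorm2 (u : 'cV[R]_d) : enorm u ^+ 2 = dot u u.
Proof.
rewrite /enorm sqr_sqrtr; last by rewrite -(dotE u u)  ?dot_ge0 //.
by rewrite dotE; apply: eq_bigr => i _; rewrite expr2.
Qed.

Lemma enorm_ge0 (u : 'cV[R]_d) : 0 <= enorm u.
Proof. exact: sqrtr_ge0. Qed.

Lemma dotM u (A : 'M[R]_d) v : dot u (A *m v) = dot (A^T *m u) v.
Proof. by rewrite /dot trmx_mul trmxK mulmxA. Qed.


Lemma proj_contract (P : 'M[R]_d) e : P^T = P -> P *m P = P ->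
  dot (e - P *m e) (e - P *m e) <= dot e e.
Proof.
move=> hT hP.
have h1 : dot (P *m e) (P *m e) = dot (P *m e) e by rewrite dotM mulmxA hT hP.
have h2 : dot e (P *m e) = dot (P *m e) (P *m e) by rewrite dotC h1.
rewrite !dotBl !dotBr h1 [dot (P *m e) e]dotC h2.
have := dot_ge0 (P *m e); lra.
Qed.

Lemma step_contract k (S : nat -> task R d) w t :
  in_ST k S -> (forall m, (1 <= m <= k)%N -> ty (S m) = tX (S m) *m w) ->
  (t.+1 <= k)%N ->
  dot (iterate S id t.+1 - w) (iterate S id t.+1 - w)
    <= dot (iterate S id t - w) (iterate S id t - w).
Proof.
move=> _ hw ht /=.
rewrite hw; last by rewrite ht.
set X := tX (S t.+1). set e := iterate S id t - w.
have -> : iterate S id t + mp_pinv X *m (X *m w - X *m iterate S id t) - w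
     = e - (mp_pinv X *m X) *m e.
  rewrite /e !mulmxBr !mulmxA. move: (iterate S id t) => a. move: (mp_pinv X *m X *m w) => b. move: (mp_pinv X *m X *m a) => c.
  by rewrite opprB addrAC.
case: (pselect (exists B, is_MP_pinv X B)) => [ex|nex].
  have := xgetPex 0 ex; rewrite -/(mp_pinv X) => -[_ h2 _ h4].
  apply: proj_contract => //.
  by rewrite mulmxA h2.
rewrite /mp_pinv xgetPN ?mul0mx ?mul0mx ?subr0 //.
by move=> B hB; apply: nex; exists B.
Qed.

Lemma forgetting_le1 k (S : nat -> task R d) : in_ST k S -> forgetting S id k <= 1.
Proof.
move=> hS; have [hr [w [hw1 hw]]] := hS.
have hE : forall t, (t <= k)%N ->
   dot (iterate S id t - w) (iterate S id t - w) <= 1.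
  elim=> [|t IH] ht.
    by rewrite /= sub0r dotNl dotNr opprK -enorm2 expr_le1 // enorm_ge0.
  apply: le_trans (step_contract _ _ _ _ hS hw ht) _; apply: IH; exact: ltnW.
rewrite /forgetting.
case: k hS hr hw hE => [|k] hS hr hw hE; first by rewrite invr0 mul0r.
have : \sum_(1 <= t < k.+2) enorm (tX (S (id t)) *m iterate S id k.+1 - ty (S (id t))) ^+ 2
   <= \sum_(1 <= t < k.+2) (1 : R).
  apply: ler_sum_nat => t /andP[t1 t2].
  have htk : (1 <= t <= k.+1)%N by rewrite t1 -ltnS t2.
  change (id t) with t; rewrite (hw t htk) -mulmxBr.
  have [_ hop] := hr t htk.
  apply: le_trans (_ : enorm (iterate S id k.+1 - w) ^+ 2 <= 1).
    by apply: lerXn2r; rewrite ?nnegrE ?sqrtr_ge0 //; apply: hop.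
  by rewrite enorm2 hE.
rewrite sumr_const_nat subn1 => h.
by rewrite mulrC ler_pdivrMr ?ltr0n // mul1r.
Qed.
End Basic.
Arguments dot {R d}.
Arguments dot_ge0 {R d}. Arguments dotE {R d}. Arguments dotC {R d}. Arguments enorm2 {R d}.

Lemma arith_step (R : realFieldType) (M J c G : R) : 2 <= M -> 0 <= J -> J + 1 <= M -> 0 <= G ->
  G <= c ^+ 2 * ((M - J) ^+ 2 + J ^+ 2) ->
  G * (1 - 4 / M ^+ 2) <=
  ((c * (M - J) * (M - (J + 1)) + c * J * (J + 1)) / ((M - (J + 1)) ^+ 2 + (J + 1) ^+ 2)) ^+ 2
    * ((M - (J + 1)) ^+ 2 + (J + 1) ^+ 2).
Proof.
move=> hM hJ hJM hG hGc.
set P := (M - J) ^+ 2 + J ^+ 2.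
set Q := (M - (J + 1)) ^+ 2 + (J + 1) ^+ 2.
set D := c * (M - J) * (M - (J + 1)) + c * J * (J + 1).
have hQ : 0 < Q by rewrite /Q; nra.
have hM2 : 0 < M ^+ 2 by nra.
have hP2 : M ^+ 2 <= 2 * P by have := sqr_ge0 (M - 2 * J); rewrite /P; nra.
have hQ2 : M ^+ 2 <= 2 * Q by have := sqr_ge0 (M - 2 * (J + 1)); rewrite /Q; nra.
have eD : (D / Q) ^+ 2 * Q = c ^+ 2 * P - c ^+ 2 * M ^+ 2 / Q.
  rewrite /D /P /Q; field; rewrite -/Q; exact: lt0r_neq0.
rewrite eD.
set u := 4 / M ^+ 2.
have hu : u * M ^+ 2 = 4 by rewrite /u mulfVK // lt0r_neq0.
set z := c ^+ 2 * M ^+ 2 / Q.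
have hz : z * Q = c ^+ 2 * M ^+ 2 by rewrite /z mulfVK // lt0r_neq0.
have hu1 : u <= 1 by rewrite /u ler_pdivrMr //; nra.
have hu0 : 0 <= u by rewrite /u divr_ge0 // ltW.
have hc := sqr_ge0 c.
have hzle : z <= c ^+ 2 * P * u.
  have hQM : 0 < Q * M ^+ 2 by rewrite mulr_gt0.
  rewrite -(ler_pM2r hQM).
  have -> : z * (Q * M ^+ 2) = c ^+ 2 * M ^+ 2 * M ^+ 2 by rewrite mulrA hz.
  have -> : c ^+ 2 * P * u * (Q * M ^+ 2) = c ^+ 2 * P * Q * 4 by rewrite -hu; ring.
  have h4 : M ^+ 2 * M ^+ 2 <= 4 * (P * Q) by nra.
  nra.
have hG1 : G * (1 - u) <= c ^+ 2 * P * (1 - u).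
  by apply: ler_wpM2r; [lra | rewrite /P; exact: hGc].
have e : c ^+ 2 * P * (1 - u) = c ^+ 2 * P - c ^+ 2 * P * u by ring.
lra.
Qed.

Lemma bernoulli (R : realFieldType) (x : R) n : -1 <= x -> 1 + n%:R * x <= (1 + x) ^+ n.
Proof.
move=> hx; elim: n => [|n IH]; first by rewrite mul0r addr0 expr0.
rewrite exprS -natr1.
have h1 : 0 <= 1 + x by lra.
have h2 : 0 <= n%:R * x ^+ 2 by rewrite mulr_ge0 ?ler0n ?sqr_ge0.
have := ler_wpM2l h1 IH; nra.
Qed.

Section Constr.
Variable R : realType.
Variable d : nat.

Definition mkT (x w : 'cV[R]_d) : task R d := existT _ 1%N (x^T, x^T *m w).

Lemma pinv_row (x : 'cV[R]_d) : dot x x != 0 ->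
  mp_pinv (x^T) = (dot x x)^-1 *: x.
Proof.
move=> hN; set B := (dot x x)^-1 *: x.
have XB : x^T *m B = 1%:M.
  rewrite /B -scalemxAr [x^T *m x]mx11_scalar scale_scalar_mx -/(dot x x).
  by rewrite mulVf.
have hB : is_MP_pinv x^T B.
  split.
  - by rewrite XB mul1mx.
  - by rewrite -mulmxA XB mulmx1.
  - by rewrite XB trmx1.
  - by rewrite /B -scalemxAl linearZ /= trmx_mul trmxK.
have := xgetPex 0 (ex_intro _ B hB).
rewrite -/(mp_pinv _) => h; exact: MP_uniq h hB.
Qed.

Lemma iter_step (S : nat -> task R d) t x w :
  S t.+1 = mkT x w -> dot x x != 0 ->
  iterate S id t.+1 - w = (iterate S id t - w)
     - (dot x (iterate S id t - w) / dot x x) *: x.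
Proof.
move=> hS hN /=; rewrite hS /tX /ty /= pinv_row //.
set e := iterate S id t - w.
rewrite -mulmxBr [x^T *m _]mx11_scalar -/(dot x _) -scalemxAl mul_mx_scalar.
rewrite scalerA -[w - _]opprB dotNr.
by rewrite /e mulrN mulrC scaleNr addrAC.
Qed.


Variables (i0 i1 : 'I_d).
Hypothesis hi : i0 != i1.

Definition e1 : 'cV[R]_d := delta_mx i0 0.
Definition e2 : 'cV[R]_d := delta_mx i1 0.
Definition v2 (a b : R) : 'cV[R]_d := a *: e1 + b *: e2.

Lemma dot_delta (i j : 'I_d) :
  dot (delta_mx i 0 : 'cV[R]_d) (delta_mx j 0) = (i == j)%:R.
Proof. by rewrite /dot trmx_delta mul_delta_mx_cond; case: (i == j); rewrite ?mulr1n ?mulr0n !mxE. Qed.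

Lemma dot_v2 a b c e : dot (v2 a b) (v2 c e) = a * c + b * e.
Proof.
rewrite /v2 !(dotDl, dotDr, dotZl, dotZr) /e1 /e2 !dot_delta eqxx (negbTE hi).
have -> : (i1 == i0) = false by rewrite eq_sym (negbTE hi).
by rewrite eqxx /=; ring.
Qed.

Lemma v2B a b c e : v2 a b - v2 c e = v2 (a - c) (b - e).
Proof. by rewrite /v2 opprD addrACA -!scalerBl. Qed.

Lemma v2Z s a b : s *: v2 a b = v2 (s * a) (s * b).
Proof. by rewrite /v2 scalerDr !scalerA. Qed.

Lemma step2D a b p q l : l != 0 -> p ^+ 2 + q ^+ 2 != 0 ->
  let x := v2 (- (l * q)) (l * p) in
  v2 a b - (dot x (v2 a b) / dot x x) *: x
   = ((a * p + b * q) / (p ^+ 2 + q ^+ 2)) *: v2 p q.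
Proof.
move=> hl hpq x.
have hd : - (l * q) * - (l * q) + l * p * (l * p) != 0.
  rewrite (_ : _ + _ = l ^+ 2 * (p ^+ 2 + q ^+ 2)); last by ring.
  by rewrite mulf_neq0 ?expf_neq0.
rewrite /x !dot_v2 !v2Z v2B; congr v2; field; by rewrite hpq hd.
Qed.

Lemma opnorm_row (x : 'cV[R]_d) : 0 < dot x x -> dot x x <= 1 -> opnorm_le1 (x^T).
Proof.
move=> hN0 hN1 v.
have h0 := dot_ge0 ((dot x x) *: v - (dot x v) *: x).
rewrite !(dotBl, dotBr, dotZl, dotZr) (dotC v x) in h0.
have h1 : 0 <= dot x x * (dot x x * dot v v - dot x v ^+ 2).
  by move: h0; congr (_ <= _); ring.
rewrite pmulr_rge0 // in h1.
have hv := dot_ge0 v.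
have hc : dot x v ^+ 2 <= dot v v by nra.
rewrite /enorm big_ord1 ler_sqrt; last by rewrite -(dotE v v) ?dot_ge0 //; apply: sumr_ge0 => i _; exact: sqr_ge0.
rewrite (_ : (x^T *m v) ord0 0 = dot x v) // (_ : \sum_(i < d) v i 0 ^+ 2 = dot v v) //.
by rewrite dotE; apply: eq_bigr => i _; rewrite expr2.
Qed.

Lemma enorm_row (x v : 'cV[R]_d) : enorm (x^T *m v) ^+ 2 = dot x v ^+ 2.
Proof. by rewrite /enorm big_ord1 sqr_sqrtr ?sqr_ge0. Qed.

Hypothesis hd : (2 <= d)%N.
Variables k m : nat.
Hypothesis hm2 : (2 <= m)%N.
Hypothesis hmk : (m <= k)%N.

Let M : R := m%:R.
Let l : R := M^-1.
Lemma M_ge2 : 2 <= M. Proof. by rewrite /M (ler_nat R 2 m). Qed.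
Lemma lM : l * M = 1. Proof. rewrite /l mulVf //; have := M_ge2; lra. Qed.

Definition xv (j : nat) := v2 (- (l * j%:R)) (l * (M - j%:R)).
Definition Sx (t : nat) := mkT (xv (t - (k - m))) e1.

Lemma xv_norm j : (j <= m)%N -> 0 < dot (xv j) (xv j) <= 1.
Proof.
move=> hj; rewrite /xv dot_v2.
have hJ : j%:R <= M by rewrite /M ler_nat.
have hJ0 : 0 <= j%:R :> R by rewrite ler0n.
have hM := M_ge2; have hl := lM.
have e : - (l * j%:R) * - (l * j%:R) + l * (M - j%:R) * (l * (M - j%:R))
   = l ^+ 2 * (j%:R ^+ 2 + (M - j%:R) ^+ 2) by ring.
rewrite e; apply/andP; split.
  apply: mulr_gt0; first by rewrite exprn_gt0 // /l invr_gt0; lra.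
  have := sqr_ge0 (M - 2 * j%:R); nra.
rewrite [X in _ <= X](_ : 1 = l ^+ 2 * M ^+ 2); last by rewrite -exprMn hl expr1n.
apply: ler_wpM2l; first exact: sqr_ge0.
have hMJ : 0 <= M - j%:R by lra.
have := mulr_ge0 hJ0 hMJ. nra.
Qed.

Lemma Sx_inST : in_ST k Sx.
Proof.
split.
  move=> t /andP[t1 t2]; split.
    by apply: leq_ltn_trans (rank_leq_row _) _.
  have hj : (t - (k - m) <= m)%N by lia.
  have /andP[h1 h2] := xv_norm _ hj; exact: opnorm_row.
exists e1; split; last by [].
have := enorm2 e1; rewrite /e1 dot_delta eqxx => h.
have := enorm_ge0 _ _ (delta_mx i0 0 : 'cV[R]_d); rewrite /e1 in h *.
move: h; rewrite /= => h; nra.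
Qed.

Lemma static t : (t <= k - m)%N -> iterate Sx id t - e1 = v2 (-1) 0.
Proof.
elim: t => [|t IH] ht.
  by rewrite /= sub0r /v2 scale0r addr0 scaleN1r.
have hS : Sx t.+1 = mkT (xv 0) e1.
  by rewrite /Sx (_ : (t.+1 - (k - m) = 0)%N) //; lia.
have hN : dot (xv 0) (xv 0) != 0.
  by have /andP[h _] := xv_norm 0 (leq0n _); rewrite lt0r_neq0.
rewrite (iter_step _ _ _ _ hS hN) IH; last by lia.
by rewrite /xv dot_v2 mulr0 oppr0 mul0r mulr0 add0r mul0r scale0r subr0.
Qed.

Lemma rot j : (j <= m)%N -> exists c : R,
  iterate Sx id (k - m + j) - e1 = c *: v2 (M - j%:R) j%:R /\
  (1 - 4 / M ^+ 2) ^+ j <= c ^+ 2 * ((M - j%:R) ^+ 2 + j%:R ^+ 2).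
Proof.
have hM := M_ge2; have hl := lM.
elim: j => [|j IH] hj.
  exists (- l); rewrite addn0 static // v2Z subr0 mulr0 mulNr hl; split => //.
  by rewrite expr0 expr0n /= addr0 sqrrN -exprMn hl expr1n.
have [c [hc hb]] := IH (ltnW hj).
have hS : Sx (k - m + j).+1 = mkT (xv j.+1) e1.
  by rewrite /Sx (_ : ((k - m + j).+1 - (k - m) = j.+1)%N) //; lia.
have hN : dot (xv j.+1) (xv j.+1) != 0.
  by have /andP[h _] := xv_norm _ hj; rewrite lt0r_neq0.
have hJ : (j.+1)%:R <= M by rewrite /M ler_nat.
have hJ0 : 0 <= j%:R :> R by rewrite ler0n.
rewrite addnS (iter_step _ _ _ _ hS hN) hc v2Z /xv.
have hq : (M - j.+1%:R) ^+ 2 + j.+1%:R ^+ 2 != 0.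
  rewrite -[(j.+1)%:R]natr1; have := sqr_ge0 (M - (j%:R + 1)); nra.
rewrite (step2D _ _ _ _ _ _ hq); last by rewrite /l invr_neq0 //; lra.
eexists; split; first reflexivity.
rewrite -[(j.+1)%:R]natr1 exprS mulrC.
apply: arith_step => //; try lra.
apply: exprn_ge0; rewrite subr_ge0 ler_pdivrMr; nra.
Qed.

Lemma forget_lb : (k - m)%:R / k%:R * (1 - 4 / M) <= forgetting Sx id k.
Proof.
have hM := M_ge2; have hl := lM.
have [c [hc hb]] := rot m (leqnn m).
rewrite subnK // subrr in hc; rewrite subrr expr0n /= add0r in hb.
have hg : 1 - 4 / M <= c ^+ 2 * M ^+ 2.
  apply: le_trans hb; apply: le_trans (bernoulli _ (- (4 / M ^+ 2)) m _).
    rewrite le_eqVlt; apply/orP; left; apply/eqP; rewrite -/M; field; lra.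
  rewrite lerNl opprK ler_pdivrMr; nra.
have hf : forall t, (1 <= t < (k - m).+1)%N ->
   1 - 4 / M <= enorm (tX (Sx (id t)) *m iterate Sx id k - ty (Sx (id t))) ^+ 2.
  move=> t /andP[t1 t2].
  have -> : Sx (id t) = mkT (xv 0) e1.
    by rewrite /Sx /= (_ : (t - (k - m) = 0)%N) //; lia.
  rewrite /tX /ty /= -mulmxBr enorm_row hc v2Z /xv dot_v2.
  have -> : - (l * 0) * (c * 0) + l * (M - 0) * (c * m%:R) = (l * M) * (c * M).
    by rewrite /M; ring.
  by rewrite hl mul1r exprMn.
rewrite /forgetting (big_cat_nat _ (n := (k - m).+1)) //=; last by lia.
have h1 := ler_sum_nat hf.
have h2 : 0 <= \sum_((k - m).+1 <= t < k.+1)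
          enorm (tX (Sx (id t)) *m iterate Sx id k - ty (Sx (id t))) ^+ 2.
  by apply: sumr_ge0 => t _; exact: sqr_ge0.
rewrite sumr_const_nat subn1 /= in h1.
rewrite (_ : (k - m)%:R / k%:R * (1 - 4 / M) = k%:R^-1 * ((k - m)%:R * (1 - 4 / M))); last by ring.
apply: ler_wpM2l; first by rewrite invr_ge0 ler0n.
rewrite -mulr_natl in h1; lra.
Qed.

End Constr.
Arguments Sx_inST {R d i0 i1} hi hd {k m} hm2 hmk.
Arguments forget_lb {R d i0 i1} hi hd {k m} hm2 hmk.

Lemma final_ineq (R : realFieldType) (K M s : R) : 1 <= s -> s ^+ 2 = K -> s <= M -> M <= s + 1 ->
  1 - (K - M) / K * (1 - 4 / M) <= 6 / s.
Proof.
move=> hs hK hsM hMs; subst K.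
have hM0 : M != 0 by apply: lt0r_neq0; lra.
have hs0 : s != 0 by apply: lt0r_neq0; lra.
have hp : 0 < M * s ^+ 2 by apply: mulr_gt0; [lra | apply: exprn_gt0; lra].
rewrite -(ler_pM2r hp).
have -> : (1 - (s ^+ 2 - M) / s ^+ 2 * (1 - 4 / M)) * (M * s ^+ 2) = 4 * s ^+ 2 + M ^+ 2 - 4 * M.
  by field; rewrite ?hM0 ?hs0 ?expf_neq0.
have -> : 6 / s * (M * s ^+ 2) = 6 * s * M by field; rewrite ?hs0.
nra.
Qed.

Lemma construct (R : realType) d k : (2 <= d)%N -> (2 <= k)%N ->
  exists S : nat -> task R d, in_ST k S /\ 1 - forgetting S id k <= 6 / Num.sqrt (k%:R).
Proof.
move=> hd hk.
pose i0 : 'I_d := Ordinal (ltn_trans (ltnSn 0) hd).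
pose i1 : 'I_d := Ordinal hd.
have hi : i0 != i1 by [].
have exP : exists n, (k <= n * n)%N by exists k; nia.
have [m hkm hmin] := ex_minnP exP.
have hm2 : (2 <= m)%N by nia.
have hmk : (m <= k)%N by apply: hmin; nia.
have hm1 : ~~ (k <= m.-1 * m.-1)%N.
  apply/negP => h; have := hmin _ h; lia.
exists (Sx R d i0 i1 k m); split; first exact: (Sx_inST hi hd hm2 hmk).
have hlb := forget_lb (R:=R) hi hd hm2 hmk.
set K : R := k%:R. set M : R := m%:R. set s := Num.sqrt K.
have hK0 : 0 <= K by rewrite ler0n.
have hsK : s ^+ 2 = K by rewrite sqr_sqrtr.
have hs0 : 0 <= s by exact: sqrtr_ge0.
have hK2 : 2 <= K by rewrite /K (ler_nat R 2 k).
have hs1 : 1 <= s by nra.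
have hMK : K <= M ^+ 2 by rewrite /K /M -natrX ler_nat expnS expn1.
have hM1 : (M - 1) ^+ 2 < K.
  have hm1' : (m.-1 * m.-1 < k)%N by rewrite ltnNge.
  have : (m.-1 * m.-1)%:R < K by rewrite /K ltr_nat.
  have e : m.-1%:R = M - 1 :> R.
    have hm0 : (0 < m)%N by lia.
    by rewrite /M -{2}(prednK hm0) -natr1 addrK.
  by rewrite natrM e -expr2.
have hsM : s <= M by nra.
have hMs : M <= s + 1 by nra.
have := final_ineq _ _ _ _ hs1 hsK hsM hMs.
rewrite natrB // in hlb.
lra.
Qed.

Theorem mainTheorem2 (R : realType) :
  exists C : R, 0 < C /\
    (forall d k : nat, (2 <= d)%N -> (2 <= k)%N ->
       1 - sup_forgetting_id R d k <= C / Num.sqrt (k%:R)) /\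
    (forall d : nat, (2 <= d)%N ->
       exists C' : R, 0 < C' /\
         forall eps : R, 0 < eps < 1 ->
           exists (k : nat) (S : nat -> task R d),
             k%:R <= C' / eps ^+ 2 /\ in_ST k S /\ forgetting S id k > 1 - eps).
Proof.
exists 6; split; first by [].
split.
  move=> d k hd hk.
  have [S [hS hF]] := construct R d k hd hk.
  have hsup : has_sup [set x | exists S : nat -> task R d, in_ST k S /\ x = forgetting S id k].
    split; first by exists (forgetting S id k); exists S.
    by exists 1 => x [S' [hS' ->]]; exact: forgetting_le1 _ _ _ _ hS'.
  have := sup_upper_bound hsup (ex_intro _ S (conj hS erefl)).
  rewrite /sup_forgetting_id; lra.
move=> d hd; exists 37; split; first by [].
move=> eps /andP[he0 he1].
set a : R := 36 / eps ^+ 2.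
have he2 : 0 < eps ^+ 2 by apply: exprn_gt0.
have he21 : eps ^+ 2 < 1 by nra.
have ha36 : 36 <= a by rewrite /a ler_pdivlMr //; nra.
have ha0 : 0 <= a by lra.
have /andP[hk1 hk2] := truncn_itv ha0.
set k := (Num.Def.trunc a).+1.
have hk : (2 <= k)%N.
  rewrite -(ltr_nat R 1) mulr1n /k; lra.
have [S [hS hF]] := construct R d k hd hk.
exists k, S; split; last split => //.
  have : a + 1 <= 37 / eps ^+ 2.
    rewrite /a ler_pdivlMr // mulrDl mulfVK ?lt0r_neq0 //; nra.
  rewrite /k -natr1; lra.
have h6 : 0 <= 6 / eps by rewrite divr_ge0 // ltW.
have hs : 6 / eps < Num.sqrt k%:R.
  rewrite -[X in X < _](ger0_norm h6) -sqrtr_sqr ltr_sqrt; last by rewrite ltr0n.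
  rewrite exprMn exprVn (_ : 6 ^+ 2 = 36 :> R); last by rewrite expr2; lra.
  by rewrite -/(36 / eps ^+ 2) -/a /k.
have hsp : 0 < Num.sqrt k%:R := le_lt_trans h6 hs.
move: hF; set s := Num.sqrt _ => hF.
have : 6 / s < eps.
  by rewrite ltr_pdivrMr // mulrC -ltr_pdivrMr.
lra.
Qed.
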